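(* Let $A_1,\dots,A_N$ be $n\times n$ nonnegative matrices that commute pairwise in the max algebra (i.e. $A_r\otimes A_s=A_s\otimes A_r$ for all $r,s$), with $\mu(A_i)\le 1$ for every $1\le i\le N$. Let $p\in\mathbb{N}$ and let $\omega=(\omega_1\,\omega_2\cdots\omega_p)\in\Sigma_N^p$ be a $p$-lettered word in which the letter $i$ occurs $p_i$ times, and let $A_\omega=A_{\omega_p}\otimes A_{\omega_{p-1}}\otimes\cdots\otimes A_{\omega_1}$. Then there exists a positive integer $q$ such that for every $1\le j\le q$ and every $i$, the limit $\widetilde{A_i^{(j)}}:=\lim_{k\to\infty}A_i^{kq+j}$ exists, and \[ \lim_{k\to\infty} A_\omega^{kq+j} \;=\; \bigotimes_{i=1}^{N}\left(\widetilde{A_i^{(j)}}\right)^{p_i}. \]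
   Context: Max algebra: on $\mathbb{R}_+=[0,\infty)$, $a\oplus b=\max\{a,b\}$, $a\otimes b=ab$; for nonnegative matrices $(A\otimes B)_{ij}=\max_k a_{ik}b_{kj}$, and all matrix powers and products are taken with respect to $\otimes$ (with $A^0=I$). Limits are entrywise. $\mu(A)$ denotes the maximum circuit geometric mean of $A$: in the digraph with an edge $i\to j$ of weight $a_{ij}$ whenever $a_{ij}>0$, the circuit geometric mean of a simple circuit $(i_1,i_2),\dots,(i_\ell,i_1)$ is $(a_{i_1i_2}\cdots a_{i_\ell i_1})^{1/\ell}$, and $\mu(A)$ is the maximum of these. $\Sigma_N^p=\{(\omega_1\cdots\omega_p):1\le\omega_i\le N\}$ is the set of $p$-lettered words on $\{1,\dots,N\}$. *)

(* Defs.v *)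
From HB Require Import structures.
From mathcomp Require Import all_boot all_order all_algebra.
From mathcomp Require Import all_classical all_reals all_analysis.
Set Implicit Arguments. Unset Strict Implicit. Unset Printing Implicit Defensive.
Import Order.TTheory GRing.Theory Num.Theory.
Local Open Scope ring_scope.
Local Open Scope classical_set_scope.
Import numFieldNormedType.Exports.

Section MaxAlg.
Variable R : realType.

(* max-times product: (A (x) B)_ij = max_k a_ik b_kj (entries are nonnegative,
   so 0 is the neutral element of max) *)
Definition maxmul n (A B : 'M[R]_n) : 'M[R]_n :=
  \matrix_(i, j) \big[Num.max/0]_(k < n) (A i k * B k j).

Definition maxpow n (A : 'M[R]_n) (k : nat) : 'M[R]_n :=
  iter k (maxmul A) 1%:M.

Definition maxprod_seq n (s : seq 'M[R]_n) : 'M[R]_n :=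
  foldr (@maxmul n) 1%:M s.

(* A_omega = A_{w_p} (x) ... (x) A_{w_1} for the word w = [:: w_1; ...; w_p] *)
Definition word_mat n N (A : 'I_N -> 'M[R]_n) (w : seq 'I_N) : 'M[R]_n :=
  foldl (fun M i => maxmul (A i) M) 1%:M w.

(* weight product of the closed walk t_0 -> t_1 -> ... -> t_l -> t_0 *)
Definition circ_weight n l (A : 'M[R]_n) (t : l.+1.-tuple 'I_n) : R :=
  \prod_(k < l.+1) A (tnth t k) (tnth t (inord ((k.+1) %% l.+1))).

Definition simple_circuit n l (A : 'M[R]_n) (t : l.+1.-tuple 'I_n) : bool :=
  uniq t && [forall k : 'I_l.+1, 0 < A (tnth t k) (tnth t (inord ((k.+1) %% l.+1)))].

Definition mu n (A : 'M[R]_n) : R :=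
  \big[Num.max/0]_(l < n)
    \big[Num.max/0]_(t : l.+1.-tuple 'I_n | simple_circuit A t)
       powR (circ_weight A t) (l.+1%:R^-1).

Definition mx_cvg n (u : nat -> 'M[R]_n) (L : 'M[R]_n) : Prop :=
  forall a b : 'I_n, ((fun k => u k a b) @ \oo --> L a b)%classic.

End MaxAlg.

(* Main.v *)
Require Import Defs.
From HB Require Import structures.
From mathcomp Require Import all_boot all_order all_algebra.
From mathcomp Require Import all_classical all_reals all_analysis.
Import Order.TTheory GRing.Theory Num.Theory.
Local Open Scope ring_scope.
Import numFieldNormedType.Exports.
From mathcomp Require Import zify.
From mathcomp.algebra_tactics Require Import ring lra.
Arguments maxpow : simpl never.
Arguments maxmul : simpl never.
Section Walks.
Variable R : realType.
Variable n : nat.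
Implicit Types X Y : 'M[R]_n.

Definition nnm X := forall a b, 0 <= X a b.

Lemma maxmulE X Y a b : maxmul X Y a b = \big[Num.max/0]_(k < n) (X a k * Y k b).
Proof. by rewrite mxE. Qed.

Lemma maxpowS X m : maxpow X m.+1 = maxmul X (maxpow X m).
Proof. by []. Qed.

Lemma maxpow0E X a b : maxpow X 0 a b = (a == b)%:R.
Proof. by rewrite /maxpow /= mxE. Qed.

Lemma bigmax_ge0 (F : 'I_n -> R) : 0 <= \big[Num.max/0]_k F k.
Proof. by elim/big_rec: _ => // i x _ hx; rewrite le_max hx orbT. Qed.

Lemma maxmul_nn X Y : nnm (maxmul X Y).
Proof. by move=> a b; rewrite maxmulE bigmax_ge0. Qed.

Lemma maxpow_nn X m : nnm (maxpow X m).
Proof.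
move=> a b; case: m => [|m]; last exact: maxmul_nn.
by rewrite maxpow0E; case: (a == b).
Qed.

Fixpoint pw X (x : 'I_n) (s : seq 'I_n) : R :=
  if s is y :: s' then X x y * pw X y s' else 1.

Lemma pw_cat X x s1 s2 : pw X x (s1 ++ s2) = pw X x s1 * pw X (last x s1) s2.
Proof. by elim: s1 x => [|y s IH] x /=; [rewrite mul1r | rewrite IH mulrA]. Qed.

Lemma pw_ge0 X : nnm X -> forall s x, 0 <= pw X x s.
Proof. by move=> hX; elim=> [|y s IH] x //=; rewrite mulr_ge0 ?hX ?IH. Qed.

Lemma pw_le_pow X : nnm X -> forall s x, pw X x s <= maxpow X (size s) x (last x s).
Proof.
move=> hX; elim=> [|y s IH] x /=; first by rewrite maxpow0E eqxx.
rewrite maxpowS maxmulE; apply: le_trans (le_bigmax _ _ y).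
by apply: ler_wpM2l; [exact: hX | exact: IH].
Qed.

Lemma pow_walk X : nnm X -> forall m x b, maxpow X m x b = 0 \/
  exists s, [/\ size s = m, last x s = b & pw X x s = maxpow X m x b].
Proof.
move=> hX; elim=> [|m IH] x b.
  rewrite maxpow0E; case: eqP => [<-|_]; last by left.
  by right; exists [::].
rewrite maxpowS maxmulE.
have [k _ ->] := @eq_bigmax _ _ _ 0 x predT (fun k => X x k * maxpow X m k b) isT
   (fun i _ => mulr_ge0 (hX _ _) (maxpow_nn _ _ _ _)).
case: (IH k b) => [->|[s [hs hl hw]]]; first by left; rewrite mulr0.
by right; exists (k :: s); split => //=; [rewrite hs | rewrite hw].
Qed.

Lemma pow_mul_le X : nnm X -> forall s t a c b,
  maxpow X s a c * maxpow X t c b <= maxpow X (s + t) a b.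
Proof.
move=> hX s t a c b.
case: (pow_walk X hX s a c) => [->|[s1 [h1 l1 w1]]]; first by rewrite mul0r maxpow_nn.
case: (pow_walk X hX t c b) => [->|[s2 [h2 l2 w2]]]; first by rewrite mulr0 maxpow_nn.
rewrite -w1 -w2 -l1 -pw_cat.
have := pw_le_pow X hX (s1 ++ s2) a.
by rewrite size_cat last_cat h1 h2 l1 l2.
Qed.

End Walks.
Arguments nnm {R n}.
Arguments pw {R n}.
Arguments pow_walk {R n}.
Arguments pw_le_pow {R n}.
Arguments pw_ge0 {R n}.
Arguments maxpow_nn {R n}.
Arguments pow_mul_le {R n}.


Lemma dec (T : eqType) (x : T) s : ~~ uniq (x :: s) ->
  exists s1 s2 s3, [/\ s = s1 ++ s2 ++ s3, last (last x s1) s2 = last x s1 & s2 != [::]].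
Proof.
elim: s x => [|y s IH] x //=.
rewrite negb_and negbK => /orP [xin | nu].
  move: xin; move: (y :: s) => l xin.
  case/splitPr: xin => p1 p2.
  exists [::], (rcons p1 x), p2; split => //=.
  - by rewrite cat_rcons.
  - by rewrite last_rcons.
  - by case: p1.
have [s1 [s2 [s3 [-> h2 h3]]]] := IH y nu.
by exists (y :: s1), s2, s3.
Qed.

Lemma dec_short (n : nat) (x : 'I_n) (s : seq 'I_n) : (n <= size s)%N ->
  exists s1 s2 s3, [/\ s = s1 ++ s2 ++ s3, last (last x s1) s2 = last x s1
     & (0 < size s2 <= n)%N].
Proof.
move=> hs.
have nu : ~~ uniq (x :: take n s).
  apply/negP => /card_uniqP hc.
  have := max_card (mem (x :: take n s)).
  by rewrite hc card_ord /= size_takel // ltnn.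
have [s1 [s2 [s3 [e h2 h3]]]] := @dec _ x _ nu.
exists s1, s2, (s3 ++ drop n s); split => //.
  by rewrite -{1}(cat_take_drop n s) e -!catA.
rewrite lt0n size_eq0 h3 /=.
have : (size (take n s) <= n)%N by rewrite size_takel.
by rewrite e !size_cat; lia.
Qed.

Section Key.
Variable R : realType.
Variable n : nat.
Variable X : 'M[R]_n.
Hypothesis hX : nnm X.
Variable g : R.
Hypothesis g0 : 0 <= g.
Hypothesis g1 : g <= 1.
Hypothesis hg : forall u d, (0 < d <= n)%N -> maxpow X d u u <= g.

Lemma key_step m a b : (n <= m)%N -> exists d, [/\ (0 < d <= n)%N, (d <= m)%N &
  maxpow X m a b <= g * maxpow X (m - d) a b].
Proof.
move=> hm.
have n0 : (0 < n)%N by apply: leq_ltn_trans (ltn_ord a).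
case: (pow_walk X hX m a b) => [->|[s [hs hl hw]]].
  by exists n; split => //; [rewrite n0 leqnn | rewrite mulr_ge0 ?maxpow_nn].
have hsn : (n <= size s)%N by rewrite hs.
have [s1 [s2 [s3 [e h2 h3]]]] := @dec_short _ a s hsn.
set y := last a s1 in h2.
exists (size s2); split => //.
  by rewrite -hs e !size_cat; lia.
rewrite -hw e !pw_cat h2 -/y.
have hs2 : pw X y s2 <= g.
  by apply: le_trans (pw_le_pow X hX s2 y) _; rewrite h2 hg.
have hs13 : pw X a s1 * pw X y s3 <= maxpow X (m - size s2) a b.
  rewrite /y -pw_cat.
  have := pw_le_pow X hX (s1 ++ s3) a.
  rewrite last_cat -/y size_cat.
  have -> : last y s3 = b by rewrite -hl e !last_cat h2.
  by rewrite -hs e !size_cat; have -> : (size s1 + (size s2 + size s3) - size s2 = size s1 + size s3)%N by lia.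
rewrite mulrCA.
apply: ler_pM => //; first by apply: pw_ge0.
by rewrite mulr_ge0 //; apply: pw_ge0.
Qed.

Definition Kb := \big[Num.max/0]_(m < n) \big[Num.max/0]_(a < n) \big[Num.max/0]_(b < n)
   maxpow X m a b.

Lemma Kb_ge0 : 0 <= Kb.
Proof. exact: bigmax_ge0. Qed.

Lemma key_bound m a b : maxpow X m a b <= Kb.
Proof.
elim/ltn_ind: m a b => m IH a b.
case: (ltnP m n) => hm.
  apply: le_trans (le_bigmax _ _ (Ordinal hm)) => /=.
  apply: le_trans (le_bigmax _ _ a) => /=.
  exact: le_trans (le_bigmax _ _ b).
have [d [hd hdm le]] := @key_step m a b hm.
apply: le_trans le _.
apply: le_trans (ler_wpM2l g0 (IH (m - d)%N _ a b)) _; first by lia.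
by rewrite ler_piMl // Kb_ge0.
Qed.

Lemma key_decay t m a b : (t * n <= m)%N -> maxpow X m a b <= Kb * g ^+ t.
Proof.
elim: t m a b => [|t IH] m a b ht; first by rewrite expr0 mulr1 key_bound.
have hm : (n <= m)%N by move: ht; rewrite mulSn; lia.
have [d [hd hdm le]] := @key_step m a b hm.
apply: le_trans le _.
rewrite exprS mulrCA; apply: ler_wpM2l => //; apply: IH.
by move: ht; rewrite mulSn; lia.
Qed.

End Key.

Lemma pw_prod (R : realType) (n : nat) (X : 'M[R]_n) x s z :
  pw X x s = \prod_(k < size s) X (nth z (x :: s) k) (nth z (x :: s) k.+1).
Proof.
elim: s x => [|y s IH] x; first by rewrite big_ord0.
by rewrite /= big_ord_recl /= IH.
Qed.

Lemma uniq_size_le (n : nat) (l : seq 'I_n) : uniq l -> (size l <= n)%N.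
Proof.
move/card_uniqP => hc.
by have := max_card (mem l); rewrite hc card_ord.
Qed.

Section Mu.
Variable R : realType.
Variable n : nat.
Variable A : 'M[R]_n.
Hypothesis hA : nnm A.
Hypothesis hmu : mu A <= 1.

Lemma circuit_case x s' : uniq (x :: s') -> pw A x (rcons s' x) <= 1.
Proof.
move=> hu.
have hl : (size s' < n)%N by have := @uniq_size_le _ _ hu.
pose t : (size s').+1.-tuple 'I_n := in_tuple (x :: s').
have ew : pw A x (rcons s' x) = circ_weight A t.
  rewrite (@pw_prod _ _ _ x _ x) size_rcons /circ_weight.
  apply: eq_bigr => k _.
  rewrite !(tnth_nth x) /=.
  rewrite -[x :: rcons s' x]/(rcons (x :: s') x) !nth_rcons /=.
  have hk := ltn_ord k; rewrite hk.
  rewrite inordK; last by rewrite ltn_pmod.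
  case: (ltnP k.+1 (size s').+1) => h.
    by rewrite modn_small //; rewrite ltnS in h; rewrite h.
  have ek : k = size s' :> nat by apply/eqP; rewrite eqn_leq -ltnS hk -ltnS h.
  by rewrite ek ltnn eqxx modnn.
rewrite ew.
have w0 : 0 <= circ_weight A t by apply: prodr_ge0 => k _; apply: hA.
case: (boolP [forall k : 'I_(size s').+1, 0 < A (tnth t k) (tnth t (inord (k.+1 %% (size s').+1)))]) => hpos.
  have sc : simple_circuit A t by rewrite /simple_circuit hpos andbT.
  have hle : powR (circ_weight A t) ((size s').+1%:R^-1) <= 1.
    apply: le_trans hmu.
    rewrite /mu; apply: le_trans (le_bigmax _ _ (Ordinal hl)) => /=.
    by rewrite (bigD1 t) //= le_max lexx.
  set w := circ_weight A t in w0 hle *.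
  set y := powR w _ in hle.
  have -> : w = powR y ((size s').+1%:R).
    by rewrite /y -powRrM mulVf // powRr1.
  have y0 : 0 <= y by apply: powR_ge0.
  have := @ge0_ler_powR R ((size s').+1%:R) (ler0n _ _) y 1.
  rewrite powR1; apply => //; by rewrite nnegrE.
move/forallPn: hpos => [k]; rewrite -leNgt => hk.
have e0 : A (tnth t k) (tnth t (inord (k.+1 %% (size s').+1))) = 0.
  by apply/le_anti; rewrite hk hA.
by rewrite /circ_weight (bigD1 k) //= e0 mul0r.
Qed.

Lemma closed_le1 k s x : (size s <= k)%N -> last x s = x -> pw A x s <= 1.
Proof.
elim: k s x => [|k IH] s x hs hl.
  by move: hs; rewrite leqn0 size_eq0 => /eqP ->.
case/lastP: s hs hl => [|s' z] hs hl; first by [].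
rewrite last_rcons in hl; subst z.
case: (boolP (uniq (x :: s'))) => hu; first exact: circuit_case.
have [s1 [s2 [s3 [e h2 h3]]]] := @dec _ x _ hu.
set y := last x s1 in h2.
have hs2 : (0 < size s2)%N by rewrite lt0n size_eq0.
move: hs; rewrite size_rcons e !size_cat => hs.
have -> : rcons (s1 ++ s2 ++ s3) x = s1 ++ s2 ++ rcons s3 x by rewrite !rcons_cat.
rewrite !pw_cat h2 -/y.
have c1 : pw A y s2 <= 1 by apply: IH h2; lia.
have c2 : pw A x (s1 ++ rcons s3 x) <= 1.
  apply: IH; last by rewrite last_cat last_rcons.
  rewrite size_cat size_rcons.
  move: hs hs2; move: (size s1) (size s2) (size s3) => a1 a2 a3.
  lia.
rewrite pw_cat -/y in c2.
rewrite mulrCA; apply: mulr_ile1 => //; first exact: pw_ge0.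
by rewrite mulr_ge0 //; apply: pw_ge0.
Qed.

Lemma diag_le1 m u : maxpow A m u u <= 1.
Proof.
case: (pow_walk A hA m u u) => [->|[s [hs hl hw]]]; first by [].
by rewrite -hw; apply: (@closed_le1 (size s)).
Qed.

End Mu.

Lemma ev_ex (P : nat -> Prop) : (\forall k \near \oo, P k)%classic -> exists N, forall k, (N <= k)%N -> P k.
Proof. by case => N _ hN; exists N => k hk; apply: hN. Qed.
Lemma ex_ev (P : nat -> Prop) : (exists N, forall k, (N <= k)%N -> P k) -> (\forall k \near \oo, P k)%classic.
Proof. by case => N hN; exists N. Qed.

Arguments ev_ex {P}. Arguments ex_ev {P}.

Lemma powmono (R : realType) (n : nat) (X Y : 'M[R]_n) : nnm X ->
  (forall a b, X a b <= Y a b) -> forall m a b, maxpow X m a b <= maxpow Y m a b.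
Proof.
move=> hX hXY; elim=> [|m IH] a b; first by rewrite !maxpow0E.
rewrite !maxpowS !maxmulE; apply: le_bigmax2 => k _.
by apply: ler_pM; rewrite ?hX ?maxpow_nn ?hXY ?IH.
Qed.

Arguments powmono {R n X Y}.

Lemma bigmax_ge0g (R : realType) (I : Type) (r : seq I) (P : pred I) (F : I -> R) :
  0 <= \big[Num.max/0]_(i <- r | P i) F i.
Proof. by elim/big_rec: _ => // i x _ hx; rewrite le_max hx orbT. Qed.


Lemma bigmax_supc (R : realType) (I : finType) (P : pred I) (F : I -> R) j x :
  P j -> x <= F j -> x <= \big[Num.max/0]_(i | P i) F i.
Proof. by move=> hj hx; rewrite (bigD1 j) //= le_max hx. Qed.

Section Conv.
Variable R : realType.
Variable n : nat.
Variable A : 'M[R]_n.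
Hypothesis hA : nnm A.
Hypothesis hmu : mu A <= 1.

Definition Cr (c : 'I_n) := [exists d : 'I_n, maxpow A d.+1 c c == 1].

Lemma critq c : Cr c -> maxpow A n`! c c = 1.
Proof.
case/existsP => d /eqP hd.
apply/le_anti; rewrite diag_le1 //=.
have : (d.+1 %| n`!)%N by apply: dvdn_fact; rewrite ltn_ord.
case/dvdnP => e ->; rewrite mulnC.
elim: e => [|e IH]; first by rewrite muln0 maxpow0E eqxx.
rewrite mulnS.
apply: le_trans (pow_mul_le A hA _ _ c c c).
by rewrite hd mul1r.
Qed.

Definition Ap : 'M[R]_n := \matrix_(x, y) (if Cr x || Cr y then 0 else A x y).

Lemma Ap_nn : nnm Ap.
Proof. by move=> x y; rewrite mxE; case: ifP. Qed.

Lemma Ap_le x y : Ap x y <= A x y.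
Proof. by rewrite mxE; case: ifP. Qed.

Definition gam := \big[Num.max/0]_(u < n) \big[Num.max/0]_(d < n) maxpow Ap d.+1 u u.

Lemma gam_ge0 : 0 <= gam.
Proof. exact: bigmax_ge0. Qed.

Lemma gam_lt1 : gam < 1.
Proof.
apply: bigmax_lt => // u _; apply: bigmax_lt => // d _.
case: (boolP (Cr u)) => hu.
  rewrite maxpowS maxmulE; apply: bigmax_lt => // k _.
  by rewrite mxE hu /= mul0r.
rewrite lt_neqAle (le_trans (powmono Ap_nn Ap_le _ _ _)) ?diag_le1 // andbT.
apply/eqP => h1; move/negP: hu; apply.
apply/existsP; exists d; rewrite eq_le diag_le1 //= -h1.
exact: powmono Ap_nn Ap_le _ _ _.
Qed.

Lemma gam_hg u d : (0 < d <= n)%N -> maxpow Ap d u u <= gam.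
Proof.
case: d => [//|d] /= hd.
apply: le_trans (le_bigmax _ _ u) => /=.
exact: le_trans (le_bigmax _ _ (Ordinal hd)).
Qed.

Lemma pw_Ap x s : (forall v, v \in x :: s -> ~~ Cr v) -> pw A x s = pw Ap x s.
Proof.
elim: s x => [|y s IH] x // h /=.
rewrite IH; last by move=> v hv; apply: h; rewrite inE hv orbT.
rewrite mxE.
have := h x; rewrite inE eqxx => /(_ isT) /negbTE ->.
by have := h y; rewrite !inE eqxx orbT => /(_ isT) /negbTE ->.
Qed.

Variable j : nat.
Variables a b : 'I_n.

Definition xs k := maxpow A (k * n`! + j) a b.
Definition Qs k := maxpow Ap (k * n`! + j) a b.
Definition Ps k := \big[Num.max/0]_(c | Cr c) \big[Num.max/0]_(s < (k * n`! + j).+1)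
   (maxpow A s a c * maxpow A (k * n`! + j - s) c b).

Lemma Ps_le_xs k : Ps k <= xs k.
Proof.
apply: bigmax_le; first exact: maxpow_nn.
move=> c _; apply: bigmax_le; first exact: maxpow_nn.
move=> s _; rewrite /xs.
have hs := ltn_ord s.
have := pow_mul_le A hA s (k * n`! + j - s) a c b.
by rewrite subnKC // -ltnS.
Qed.

Lemma Ps_mono k : Ps k <= Ps k.+1.
Proof.
rewrite /Ps.
apply: bigmax_le; first exact: bigmax_ge0g.
move=> c hc; apply: bigmax_le; first exact: bigmax_ge0g.
move=> s _.
apply: (@bigmax_supc R _ Cr _ c) => //=.
have hs : (s + n`! < (k.+1 * n`! + j).+1)%N.
  by have := ltn_ord s; rewrite mulSn; lia.
apply: le_trans (le_bigmax _ _ (Ordinal hs)) => /=.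
have -> : (k.+1 * n`! + j - (s + n`!) = k * n`! + j - s)%N by rewrite mulSn; lia.
apply: ler_wpM2r; first exact: maxpow_nn.
have := pow_mul_le A hA s n`! a c c.
by rewrite critq // mulr1.
Qed.

Lemma xs_le k : xs k <= Num.max (Ps k) (Qs k).
Proof.
rewrite /xs.
case: (pow_walk A hA (k * n`! + j) a b) => [->|[s [hs hl hw]]].
  by rewrite le_max bigmax_ge0g.
rewrite -hw.
case: (boolP (has Cr (a :: s))) => hh.
  rewrite le_max; apply/orP; left.
  have [c hcin hc] := hasP hh.
  have [s1 [s2 [e1 e2]]] : exists s1 s2, s = s1 ++ s2 /\ last a s1 = c.
    move: hcin; rewrite inE => /orP [/eqP ->|hcin].
      by exists [::], s.
    case/splitPr: hcin => p1 p2.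
    by exists (rcons p1 c), p2; rewrite cat_rcons last_rcons.
  rewrite e1 pw_cat e2.
  apply: (@bigmax_supc R _ Cr _ c) => //=.
  have h1 : (size s1 < (k * n`! + j).+1)%N by rewrite -hs e1 size_cat; lia.
  apply: le_trans (le_bigmax _ _ (Ordinal h1)) => /=.
  apply: ler_pM; rewrite ?pw_ge0 //.
    by have := pw_le_pow A hA s1 a; rewrite e2.
  have := pw_le_pow A hA s2 c.
  have -> : last c s2 = b by rewrite -hl e1 last_cat e2.
  by have -> : (k * n`! + j - size s1 = size s2)%N by rewrite -hs e1 size_cat; lia.
rewrite le_max; apply/orP; right.
rewrite pw_Ap; last by move=> v hv; apply/negP => hcv; move/negP: hh; apply; apply/hasP; exists v.
by have := pw_le_pow Ap Ap_nn s a; rewrite hs hl.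
Qed.

End Conv.
Arguments Cr {R n}. Arguments Ap {R n}. Arguments gam {R n}. Arguments xs {R n}.
Arguments Qs {R n}. Arguments Ps {R n}. Arguments Kb {R n}.
Arguments Ps_mono {R n A}. Arguments Ps_le_xs {R n A}. Arguments xs_le {R n A}.
Arguments gam_lt1 {R n A}. Arguments gam_hg {R n A}. Arguments key_bound {R n X}.
Arguments key_decay {R n X}. Arguments Kb_ge0 {R n}. Arguments Ap_nn {R n A}.
Arguments gam_ge0 {R n}. Arguments critq {R n A}.

Lemma xs_cvg (R : realType) (n : nat) (A : 'M[R]_n) (hA : nnm A) (hmu : mu A <= 1)
   (j : nat) (a b : 'I_n) :
  exists L : R, ((fun k => maxpow A (k * n`! + j) a b) @ \oo --> L)%classic.
Proof.
have hPm : nondecreasing_seq (Ps A j a b) by apply/nondecreasing_seqP => k; apply: Ps_mono.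
have hg1 : forall u d, (0 < d <= n)%N -> maxpow A d u u <= 1.
  by move=> u d _; apply: diag_le1.
have hPb : has_ubound (range (Ps A j a b)).
  exists (Kb A) => _ [k _ <-].
  apply: le_trans (Ps_le_xs hA j a b k) _.
  exact: (key_bound hA 1 ler01 (lexx 1) hg1).
have cP := nondecreasing_cvgn hPm hPb.
set L := sup _ in cP.
exists L; apply/cvgrPdist_lt => e e0.
have e2 : 0 < e / 2 by rewrite divr_gt0.
have [N1 hN1] := ev_ex ((cvgrPdist_lt _ _).1 cP _ e2).
set K := Kb (Ap A).
have K0 : 0 <= K := Kb_ge0 (Ap A).
have ge0 := gam_ge0 A.
have gl1 := gam_lt1 hA hmu.
have hz : `|gam A| < 1 by rewrite ger0_norm.
have e3 : 0 < e / 2 / (K + 1) by rewrite divr_gt0 // ltr_wpDl.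
have [N2 hN2] := ev_ex ((cvgrPdist_lt _ _).1 (cvg_expr hz) _ e3).
have hQ : forall k, (N2 * n <= k)%N -> Qs A j a b k < e / 2.
  move=> k hk.
  have hd := key_decay (Ap_nn hA) (gam A) ge0 (ltW gl1) (@gam_hg _ _ A) N2 (k * n`! + j) a b.
  have : (N2 * n <= k * n`! + j)%N.
    apply: leq_trans hk _; apply: leq_trans (leq_addr _ _).
    by rewrite leq_pmulr // fact_gt0.
  move/hd => {}hd.
  apply: le_lt_trans hd _.
  have := hN2 N2 (leqnn _); rewrite sub0r normrN ger0_norm ?exprn_ge0 // => hg.
  have gp : 0 <= gam A ^+ N2 by rewrite exprn_ge0.
  have : K * gam A ^+ N2 <= (K + 1) * gam A ^+ N2 by rewrite ler_wpM2r // lerDl.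
  have : (K + 1) * gam A ^+ N2 < (K + 1) * (e / 2 / (K + 1)).
    by rewrite ltr_pM2l // ltr_wpDl.
  rewrite mulrCA divff ?mulr1; last by rewrite gt_eqF // ltr_wpDl.
  move=> h1 h2; exact: le_lt_trans h2 h1.
apply: ex_ev; exists (maxn N1 (N2 * n)) => k hk.
have h1 := hN1 k (leq_trans (leq_maxl _ _) hk).
have h3 := hQ k (leq_trans (leq_maxr _ _) hk).
have h4 := ler_distD (Ps A j a b k) L (xs A j a b k).
have hPx := Ps_le_xs hA j a b k.
have h5 : `|Ps A j a b k - xs A j a b k| = xs A j a b k - Ps A j a b k.
  by rewrite distrC ger0_norm // subr_ge0.
have hxl := xs_le hA hmu j a b k.
have hQ0 : 0 <= Qs A j a b k by apply: maxpow_nn.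
have hP0 : 0 <= Ps A j a b k by apply: bigmax_ge0g.
have h2 : xs A j a b k - Ps A j a b k <= Qs A j a b k.
  move: hxl; rewrite le_max => /orP [hx|hx]; lra.
rewrite /xs in h4 h5 h2.
lra.
Qed.

Section Alg.
Variable R : realType.
Variable n : nat.
Implicit Types X Y Z : 'M[R]_n.

Lemma bigmax_mulr (F : 'I_n -> R) c : 0 <= c ->
  (\big[Num.max/0]_(l < n) F l) * c = \big[Num.max/0]_(l < n) (F l * c).
Proof.
move=> c0; apply: (big_morph (fun x => x * c)); last by rewrite mul0r.
by move=> x y; rewrite maxr_pMl.
Qed.

Lemma bigmax_mull (F : 'I_n -> R) c : 0 <= c ->
  c * (\big[Num.max/0]_(l < n) F l) = \big[Num.max/0]_(l < n) (c * F l).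
Proof.
move=> c0; apply: (big_morph (fun x => c * x)); last by rewrite mulr0.
by move=> x y; rewrite maxr_pMr.
Qed.

Lemma bigmax_exch (F : 'I_n -> 'I_n -> R) :
  \big[Num.max/0]_(l < n) \big[Num.max/0]_(k < n) F k l =
  \big[Num.max/0]_(k < n) \big[Num.max/0]_(l < n) F k l.
Proof.
apply/le_anti/andP; split.
  apply: bigmax_le; first exact: bigmax_ge0.
  move=> l _; apply: bigmax_le; first exact: bigmax_ge0.
  move=> k _; apply: le_trans (le_bigmax _ _ k) => /=.
  exact: le_trans (le_bigmax _ _ l).
apply: bigmax_le; first exact: bigmax_ge0.
move=> k _; apply: bigmax_le; first exact: bigmax_ge0.
move=> l _; apply: le_trans (le_bigmax _ _ l) => /=.
exact: le_trans (le_bigmax _ _ k).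
Qed.

Lemma maxmulA X Y Z : nnm X -> nnm Z ->
  maxmul (maxmul X Y) Z = maxmul X (maxmul Y Z).
Proof.
move=> hX hZ; apply/matrixP => i j.
rewrite !maxmulE.
under eq_bigr => l _ do rewrite maxmulE bigmax_mulr //.
under [RHS]eq_bigr => k _ do rewrite maxmulE bigmax_mull //.
rewrite bigmax_exch; apply: eq_bigr => k _; apply: eq_bigr => l _.
by rewrite mulrA.
Qed.

Lemma nn1 : nnm (1%:M : 'M[R]_n).
Proof. by move=> a b; rewrite mxE; case: (a == b). Qed.

Lemma maxmul1m X : nnm X -> maxmul 1%:M X = X.
Proof.
move=> hX; apply/matrixP => i j; rewrite maxmulE.
apply/le_anti/andP; split.
  apply: bigmax_le; first exact: hX.
  move=> k _; rewrite mxE; case: eqP => [->|_]; first by rewrite mul1r.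
  by rewrite mul0r.
by apply: le_trans (le_bigmax _ _ i); rewrite /= mxE eqxx mul1r.
Qed.

Lemma maxmulm1 X : nnm X -> maxmul X 1%:M = X.
Proof.
move=> hX; apply/matrixP => i j; rewrite maxmulE.
apply/le_anti/andP; split.
  apply: bigmax_le; first exact: hX.
  move=> k _; rewrite mxE; case: eqP => [->|_]; first by rewrite mulr1.
  by rewrite mulr0.
by apply: le_trans (le_bigmax _ _ j); rewrite /= mxE eqxx mulr1.
Qed.

Lemma maxpow0 X : maxpow X 0 = 1%:M.
Proof. by []. Qed.

Lemma maxpowD X a b : nnm X -> maxpow X (a + b) = maxmul (maxpow X a) (maxpow X b).
Proof.
move=> hX; elim: a => [|a IH].
  by rewrite add0n maxpow0 maxmul1m //; apply: maxpow_nn.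
rewrite addSn maxpowS IH -maxmulA //; apply: maxpow_nn.
Qed.

Lemma maxpowM X a b : nnm X -> maxpow X (a * b) = maxpow (maxpow X a) b.
Proof.
move=> hX; elim: b => [|b IH]; first by rewrite muln0.
by rewrite mulnS maxpowD // IH.
Qed.

Lemma comm_pow X Y k : nnm X -> nnm Y -> maxmul X Y = maxmul Y X ->
  maxmul (maxpow X k) Y = maxmul Y (maxpow X k).
Proof.
move=> hX hY hc; elim: k => [|k IH]; first by rewrite maxpow0 maxmul1m // maxmulm1.
by rewrite maxpowS (maxmulA X (maxpow X k) Y hX hY) IH -(maxmulA X Y (maxpow X k) hX (maxpow_nn _ _)) hc (maxmulA Y X (maxpow X k) hY (maxpow_nn _ _)).
Qed.

End Alg.

Arguments maxmulA {R n}. Arguments maxmul1m {R n}. Arguments maxmulm1 {R n}.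
Arguments maxpowD {R n}. Arguments maxpowM {R n}. Arguments comm_pow {R n}.
Arguments nn1 {R n}. Arguments maxpow0 {R n}. Arguments maxmul_nn {R n}.

Section Fam.
Variable R : realType.
Variables n N : nat.
Variable A : 'I_N -> 'M[R]_n.
Hypothesis hA : forall i, nnm (A i).
Hypothesis hc : forall r s, maxmul (A r) (A s) = maxmul (A s) (A r).

Definition G (s : seq 'I_N) (c : 'I_N -> nat) :=
  maxprod_seq [seq maxpow (A i) (c i) | i <- s].

Lemma G_nn s c : nnm (G s c).
Proof. by case: s => [|i s]; [exact: nn1 | exact: maxmul_nn]. Qed.

Lemma G_ext_in s c d : (forall i, i \in s -> c i = d i) -> G s c = G s d.
Proof. by move=> h; rewrite /G; congr maxprod_seq; apply/eq_in_map => i /h ->. Qed.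

Lemma G0 s : G s (fun _ => 0%N) = 1%:M.
Proof.
elim: s => [|i s IH] //.
by rewrite /G /= -/(G s _) IH maxpow0 maxmul1m //; exact: nn1.
Qed.

Lemma comm_pp i k e d : maxmul (maxpow (A i) e) (maxpow (A k) d) =
  maxmul (maxpow (A k) d) (maxpow (A i) e).
Proof.
have h1 := comm_pow (A k) (A i) d (hA k) (hA i) (hc k i).
by apply: comm_pow (hA i) (maxpow_nn _ _) _; rewrite h1.
Qed.

Lemma comm_G Z : nnm Z -> (forall i e, maxmul Z (maxpow (A i) e) = maxmul (maxpow (A i) e) Z) ->
  forall s c, maxmul Z (G s c) = maxmul (G s c) Z.
Proof.
move=> hZ hz; elim=> [|i s IH] c.
  by rewrite /G /= maxmulm1 // maxmul1m.
rewrite /G /= -/(G s c).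
rewrite -(maxmulA Z (maxpow (A i) (c i)) (G s c) hZ (G_nn _ _)) hz.
rewrite (maxmulA (maxpow (A i) (c i)) Z (G s c) (maxpow_nn _ _) (G_nn _ _)) IH.
by rewrite (maxmulA (maxpow (A i) (c i)) (G s c) Z (maxpow_nn _ _) hZ).
Qed.

Lemma G_mul s c d : maxmul (G s c) (G s d) = G s (fun i => c i + d i).
Proof.
elim: s => [|i s IH].
  by rewrite /G /= maxmul1m //; exact: nn1.
rewrite /G /= -!/(G s _).
set Pc := maxpow (A i) (c i); set Pd := maxpow (A i) (d i).
have hPc : nnm Pc by apply: maxpow_nn.
have hPd : nnm Pd by apply: maxpow_nn.
rewrite (maxmulA Pc (G s c) (maxmul Pd (G s d)) hPc (maxmul_nn _ _)).
rewrite -(maxmulA (G s c) Pd (G s d) (G_nn _ _) (G_nn _ _)).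
have -> : maxmul (G s c) Pd = maxmul Pd (G s c).
  symmetry; apply: comm_G => // k e; exact: comm_pp.
rewrite (maxmulA Pd (G s c) (G s d) hPd (G_nn _ _)) IH.
by rewrite -(maxmulA Pc Pd _ hPc (G_nn _ _)) /Pc /Pd -maxpowD.
Qed.

Lemma G_pow s c m : maxpow (G s c) m = G s (fun i => (c i * m)%N).
Proof.
elim: m => [|m IH].
  by rewrite maxpow0 -(G0 s); apply: G_ext_in => i _; rewrite muln0.
rewrite maxpowS IH G_mul; apply: G_ext_in => i _; by rewrite mulnS.
Qed.

Lemma G_shift s c x : uniq s -> x \in s ->
  maxmul (A x) (G s c) = G s (fun i => (c i + (i == x))%N).
Proof.
elim: s => [|k s IH] //= /andP [hk hu].
rewrite inE; case: (eqVneq x k) => [exk _|hxk /= hx].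
  subst k.
  rewrite /G /= -!/(G s _) eqxx addn1.
  rewrite -(maxmulA (A x) (maxpow (A x) (c x)) (G s c) (hA x) (G_nn _ _)) -maxpowS.
  congr maxmul; apply: G_ext_in => i hi.
  have -> : (i == x) = false by apply/negbTE/negP => /eqP eix; move: hk; rewrite -eix hi.
  by rewrite addn0.
rewrite /G /= -!/(G s _) -IH //.
have -> : (k == x) = false by rewrite eq_sym; apply/negbTE.
rewrite addn0.
rewrite -(maxmulA (A x) (maxpow (A k) (c k)) (G s c) (hA x) (G_nn _ _)).
rewrite -(comm_pow (A k) (A x) (c k) (hA k) (hA x) (hc k x)).
by rewrite (maxmulA (maxpow (A k) (c k)) (A x) (G s c) (maxpow_nn _ _) (G_nn _ _)).
Qed.

Lemma word_G (w : seq 'I_N) : word_mat A w = G (enum 'I_N) (fun i => count_mem i w).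
Proof.
elim/last_ind: w => [|w x IH].
  have -> : G (enum 'I_N) (fun i => count_mem i [::]) = G (enum 'I_N) (fun _ => 0%N) by [].
  by rewrite G0.
have -> : word_mat A (rcons w x) = maxmul (A x) (word_mat A w) by rewrite /word_mat foldl_rcons.
rewrite IH G_shift ?enum_uniq ?mem_enum //.
apply: G_ext_in => i _.
by rewrite -cats1 count_cat /= addn0 eq_sym.
Qed.

End Fam.

Arguments G {R n N}.
Arguments word_G {R n N A}. Arguments G_pow {R n N A}.

Lemma cvg_max2 (R : realType) (u v : nat -> R) (a b : R) : (u @ \oo --> a)%classic ->
  (v @ \oo --> b)%classic ->
  ((fun k => Num.max (u k) (v k)) @ \oo --> Num.max a b)%classic.
Proof.
move=> ha hb.
apply: (@continuous2_cvg nat R R R _ _ u v (fun x y => Num.max x y) a b _ ha hb).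
exact: (@max_continuous _ R (a, b)).
Qed.

Lemma bigmax_cvg (R : realType) (I : Type) (r : seq I) (F : I -> nat -> R) (L : I -> R) :
  (forall l, (F l @ \oo --> L l)%classic) ->
  ((fun k => \big[Num.max/0]_(l <- r) F l k) @ \oo --> \big[Num.max/0]_(l <- r) L l)%classic.
Proof.
move=> h; elim: r => [|i r IH].
  rewrite big_nil.
  have -> : (fun k => \big[Num.max/0]_(l <- [::]) F l k) = (fun _ => 0 : R).
    by apply: boolp.funext => k; rewrite big_nil.
  exact: cvg_cst.
rewrite big_cons.
have -> : (fun k => \big[Num.max/0]_(l <- i :: r) F l k) =
    (fun k => Num.max (F i k) (\big[Num.max/0]_(l <- r) F l k)).
  by apply: boolp.funext => k; rewrite big_cons.
exact: cvg_max2.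
Qed.

Section Lim.
Variable R : realType.
Variable n : nat.

Lemma mx_cvg_mul (u v : nat -> 'M[R]_n) U V : mx_cvg u U -> mx_cvg v V ->
  mx_cvg (fun k => maxmul (u k) (v k)) (maxmul U V).
Proof.
move=> hu hv a b.
have -> : (fun k => maxmul (u k) (v k) a b) =
   (fun k => \big[Num.max/0]_(l <- index_enum 'I_n) (fun l k => u k a l * v k l b) l k).
  by apply: boolp.funext => k; rewrite maxmulE.
rewrite maxmulE; apply: bigmax_cvg => l.
exact: cvgM.
Qed.

Lemma mx_cvg_const (M : 'M[R]_n) : mx_cvg (fun _ => M) M.
Proof. by move=> a b; exact: cvg_cst. Qed.

Lemma mx_cvg_pow (u : nat -> 'M[R]_n) U c : mx_cvg u U ->
  mx_cvg (fun k => maxpow (u k) c) (maxpow U c).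
Proof.
move=> hu; elim: c => [|c IH]; first exact: mx_cvg_const.
exact: mx_cvg_mul.
Qed.

Lemma mx_cvg_prod (I : Type) (f : I -> nat -> 'M[R]_n) (F : I -> 'M[R]_n) (s : seq I) :
  (forall i, mx_cvg (f i) (F i)) ->
  mx_cvg (fun k => maxprod_seq [seq f i k | i <- s]) (maxprod_seq [seq F i | i <- s]).
Proof.
move=> h; elim: s => [|i s IH]; first exact: mx_cvg_const.
exact: mx_cvg_mul.
Qed.

Lemma mx_cvg_ext (u u' : nat -> 'M[R]_n) L : (forall k, u k = u' k) -> mx_cvg u L -> mx_cvg u' L.
Proof.
move=> e h a b.
have -> : (fun k => u' k a b) = (fun k => u k a b) by apply: boolp.funext => k; rewrite e.
exact: h.
Qed.

End Lim.

Theorem theorem3p2 (R : realType) (n N : nat) (A : 'I_N -> 'M[R]_n)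
  (Anonneg : forall (i : 'I_N) (a b : 'I_n), 0 <= A i a b)
  (Acomm : forall r s : 'I_N, maxmul (A r) (A s) = maxmul (A s) (A r))
  (Amu : forall i : 'I_N, mu (A i) <= 1)
  (p : nat) (w : p.-tuple 'I_N) :
  exists q : nat, (0 < q)%N /\
    forall j : nat, (1 <= j <= q)%N ->
      exists Lt : 'I_N -> 'M[R]_n,
        (forall i : 'I_N, mx_cvg (fun k => maxpow (A i) (k * q + j)) (Lt i)) /\
        mx_cvg (fun k => maxpow (word_mat A w) (k * q + j))
               (maxprod_seq [seq maxpow (Lt i) (count_mem i w) | i <- enum 'I_N]).
Proof.
exists n`!; split; first exact: fact_gt0.
move=> j _.
have H : forall x : 'I_N * 'I_n * 'I_n, exists L : R,
    ((fun k => maxpow (A x.1.1) (k * n`! + j) x.1.2 x.2) @ \oo --> L)%classic.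
  by move=> [[i a] b]; apply: xs_cvg.
have [f hf] := boolp.choice H.
pose Lt i := \matrix_(a, b) f (i, a, b).
have hLt : forall i, mx_cvg (fun k => maxpow (A i) (k * n`! + j)) (Lt i).
  by move=> i a b; rewrite mxE; exact: (hf (i, a, b)).
exists Lt; split => //.
apply: (@mx_cvg_ext R n (fun k => maxprod_seq
   [seq maxpow (maxpow (A i) (k * n`! + j)) (count_mem i w) | i <- enum 'I_N])).
  move=> k.
  rewrite (word_G Anonneg Acomm) (G_pow Anonneg Acomm).
  rewrite /G; congr maxprod_seq; apply: eq_map => i.
  by rewrite -maxpowM // mulnC.
apply: (@mx_cvg_prod R n _ (fun i k => maxpow (maxpow (A i) (k * n`! + j)) (count_mem i w))).
move=> i; exact: mx_cvg_pow.
Qed.
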